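(* Let $p\ge 2$ be an integer. Let $G$ be the graph obtained as follows: take a clique on vertices $u_1,\dots,u_p$; add vertices $s,t$ and, for each $i\in\{1,\dots,p\}$, new vertices $x_i,y_i$ with edges $sx_i$, $x_iu_i$, $ty_i$, $y_iu_i$. Then $\lambda_G(s,t)=p$ and $d_G(s,t)=2$. In particular, $\lambda_G(s,t)-d_G(s,t)$ can be arbitrarily large.
   Context: Rendezvous game with adversaries. Let $G$ be a finite, simple, undirected, connected graph, let $s,t\in V(G)$ and let $k\ge 1$ be an integer. Two players play: Facilitator, who controls two agents $R$ and $J$ initially placed on $s$ and $t$ respectively, and Divider, who controls $k$ agents $D_1,\dots,D_k$ which Divider initially places on vertices of $V(G)\setminus\{s,t\}$ of his choice (several agents may share a vertex). After the initial placement the players alternate moves, Facilitator moving first. In a move, the player moves each of his agents to an adjacent vertex or leaves it where it is; no agent may be moved to a vertex currently occupied by an agent of the opponent. Both players have full information. Facilitator wins if at some moment $R$ and $J$ occupy the same vertex; Divider wins if this never happens. $d_G(s,t)$ is the minimum $k$ such that Divider with $k$ agents has a winning strategy on $G$ against Facilitator starting from $s$ and $t$; $d_G(s,t)=+\infty$ if $s=t$ or $s,t$ are adjacent. $\lambda_G(s,t)$ is the minimum size of a set $S\subseteq V(G)\setminus\{s,t\}$ such that $s$ and $t$ lie in different connected components of $G-S$; $\lambda_G(s,t)=+\infty$ if $s=t$ or $s,t$ are adjacent. *)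

(* Defs.v *)
From mathcomp Require Import all_boot.
From mathcomp Require Import boolp.

Set Implicit Arguments.
Unset Strict Implicit.
Unset Printing Implicit Defensive.

(** closed neighbourhood: [y] is [x] or adjacent to [x] (a single move). *)
Definition cnbr (V : finType) (e : rel V) (x y : V) : bool := (y == x) || e x y.

(** * Connectivity [lambda_G(s,t)]  ([None] encodes [+oo]). *)

Definition separates (V : finType) (e : rel V) (s t : V) (S : {set V}) : bool :=
  [&& s \notin S, t \notin S &
      ~~ connect [rel x y | [&& e x y, x \notin S & y \notin S]] s t].

Definition lambdaG (V : finType) (e : rel V) (s t : V) : option nat :=
  if (s == t) || e s t then None
  else Some (\big[minn/#|V|]_(S : {set V} | separates e s t S) #|S|).

(** A play is described by the positions [r n], [j n] of R and J at time [n]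
   (time [n+1] = after Facilitator's [n]-th move) and by the positions
   [dpos n] of the Divider agents when Facilitator makes his [n]-th move. *)

Definition hist (V : finType) (r j : nat -> V) (n : nat) : seq (V * V) :=
  mkseq (fun i => (r i, j i)) n.+1.

Definition dpos (V : finType) (k : nat) (d0 : {ffun 'I_k -> V})
  (sigma : seq (V * V) -> {ffun 'I_k -> V}) (r j : nat -> V) (n : nat)
  : {ffun 'I_k -> V} :=
  if n is n'.+1 then sigma (hist r j n) else d0.

Definition F_legal (V : finType) (e : rel V) (k : nat) (d : {ffun 'I_k -> V})
  (x x' : V) : bool :=
  cnbr e x x' && [forall i, d i != x'].

Definition D_legal (V : finType) (e : rel V) (k : nat) (d d' : {ffun 'I_k -> V})
  (x y : V) : bool :=
  [forall i, [&& cnbr e (d i) (d' i), d' i != x & d' i != y]].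

Definition divider_strategy_wins (V : finType) (e : rel V) (s t : V) (k : nat)
  (d0 : {ffun 'I_k -> V}) (sigma : seq (V * V) -> {ffun 'I_k -> V}) : Prop :=
  forall r j : nat -> V, r 0 = s -> j 0 = t ->
  forall n : nat,
    (forall m, m < n ->
       F_legal e (dpos d0 sigma r j m) (r m) (r m.+1) /\
       F_legal e (dpos d0 sigma r j m) (j m) (j m.+1)) ->
    r n <> j n /\
    (forall m, m < n ->
       D_legal e (dpos d0 sigma r j m) (dpos d0 sigma r j m.+1) (r m.+1) (j m.+1)).

Definition divider_wins (V : finType) (e : rel V) (s t : V) (k : nat) : Prop :=
  exists d0 : {ffun 'I_k -> V},
    (forall i, d0 i != s /\ d0 i != t) /\
    exists sigma, divider_strategy_wins e s t d0 sigma.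

Lemma dG_ex_aux (V : finType) (e : rel V) (s t : V) :
  (exists k, 0 < k /\ divider_wins e s t k) ->
  exists k, `[< 0 < k /\ divider_wins e s t k >].
Proof. by move=> [k Hk]; exists k; apply/asboolP. Qed.

(** [d_G(s,t)]: least [k >= 1] for which Divider wins ([None] = [+oo]). *)
Definition dG (V : finType) (e : rel V) (s t : V) : option nat :=
  if (s == t) || e s t then None
  else match pselect (exists k, 0 < k /\ divider_wins e s t k) with
       | left H => Some (ex_minn (dG_ex_aux H))
       | right _ => None
       end.

(** * The graph of the theorem.
   Vertices: [inl (0,i)] = u_i, [inl (1,i)] = x_i, [inl (2,i)] = y_i,
   [inr true] = s, [inr false] = t. *)
Definition gV (p : nat) : finType := (('I_3 * 'I_p) + bool)%type.

Definition gedge (p : nat) (a b : gV p) : bool :=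
  match a, b with
  | inl (k, i), inl (l, j) =>
      [&& k == 0 :> nat, l == 0 :> nat & i != j]
      || ((i == j) && (((k == 0 :> nat) && (l != 0 :> nat))
                       || ((k != 0 :> nat) && (l == 0 :> nat))))
  | inl (k, _), inr c => k == (if c then 1 else 2) :> nat
  | inr c, inl (k, _) => k == (if c then 1 else 2) :> nat
  | inr _, inr _ => false
  end.

Definition gs (p : nat) : gV p := inr true.
Definition gt (p : nat) : gV p := inr false.

(* Main.v *)
Require Import Defs.
From mathcomp Require Import all_boot.
From mathcomp Require Import boolp.
Set Implicit Arguments. Unset Strict Implicit.

Definition vu p (i : 'I_p) : gV p := inl (ord0, i).
Definition vx p (i : 'I_p) : gV p := inl (@Ordinal 3 1 isT, i).
Definition vy p (i : 'I_p) : gV p := inl (@Ordinal 3 2 isT, i).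

Lemma connect_inv (T : finType) (e : rel T) (P : pred T) x y :
  (forall a b, P a -> e a b -> P b) -> P x -> connect e x y -> P y.
Proof.
move=> HP Px /connectP [q]; elim: q x Px => [|z q IH] x Px /=.
  by move=> _ ->.
by move/andP=> [exz pq] ly; exact: IH (HP _ _ Px exz) pq ly.
Qed.

Definition isX p (v : gV p) : bool :=
  match v with inl (k, _) => nat_of_ord k == 1 | inr b => b end.

Lemma sep_U p : separates (@gedge p) (gs p) (gt p) [set vu i | i : 'I_p].
Proof.
apply/and3P; split.
- by apply/imsetP => [[i _]].
- by apply/imsetP => [[i _]].
apply/negP => H.
suff : isX (gt p) by [].
apply: (connect_inv _ _ H) => //.
move=> [[[[|[|[|k]]] Hk] i]|[]] [[[[|[|[|l]]] Hl] j]|[]] //= _; rewrite ?andbF ?orbF ?andbT //=.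
all: try by case/and3P.
case/and3P => /eqP <- _ /negP []; apply/imsetP; exists i => //.
by rewrite /vu; congr inl; congr pair; apply: val_inj.
Qed.

Definition idx p (v : gV p) : option 'I_p :=
  match v with inl (_, i) => Some i | inr _ => None end.

Lemma sep_lb p (S : {set gV p}) : separates (@gedge p) (gs p) (gt p) S -> p <= #|S|.
Proof.
case/and3P => sS tS nc.
have H : forall i : 'I_p, Some i \in @idx p @: S.
  move=> i; case: (boolP (vx i \in S)) => [h|hx]; first by apply/imsetP; exists (vx i).
  case: (boolP (vu i \in S)) => [h|hu]; first by apply/imsetP; exists (vu i).
  case: (boolP (vy i \in S)) => [h|hy]; first by apply/imsetP; exists (vy i).
  exfalso; move/negP: nc; apply; apply/connectP.
  exists [:: vx i; vu i; vy i; gt p] => //=.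
  by rewrite sS hx hu hy tS !eqxx.
have E : #|[set Some i | i : 'I_p]| = p.
  by rewrite card_imset ?cardsT ?card_ord //; exact: Some_inj.
rewrite -{1}E; apply: leq_trans (leq_imset_card (@idx p) S).
apply: subset_leq_card; apply/subsetP => o /imsetP [i _ ->]; exact: H.
Qed.

Lemma bigmin_le (I : eqType) (r : seq I) (P : pred I) F x0 j :
  j \in r -> P j -> \big[minn/x0]_(i <- r | P i) F i <= F j.
Proof.
elim: r => // a r IH; rewrite inE big_cons; case/orP => [/eqP <-|jr] Pj.
  by rewrite Pj geq_minl.
case: (P a); last exact: IH.
by rewrite (leq_trans (geq_minr _ _)) //; exact: IH.
Qed.

Lemma lambda_part p : lambdaG (@gedge p) (gs p) (gt p) = Some p.
Proof.
rewrite /lambdaG /=; congr Some; apply/eqP; rewrite eqn_leq; apply/andP; split.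
  have E : #|[set vu i | i : 'I_p]| = p by rewrite card_imset ?card_ord // => i j [].
  apply: leq_trans (_ : _ <= #|[set vu i | i : 'I_p]|) _; last by rewrite E.
  apply: bigmin_le; [exact: mem_index_enum| exact: sep_U].
apply: (big_ind (fun x => p <= x)).
- have E : #|[set vu i | i : 'I_p]| = p by rewrite card_imset ?card_ord // => i j [].
  rewrite -{1}E; exact: max_card.
- by move=> x y hx hy; rewrite leq_min hx hy.
- by move=> S; exact: sep_lb.
Qed.

Definition shadow p (i0 : 'I_p) (v : gV p) : gV p :=
  match v with inl (_, i) => inl (ord0, i) | inr _ => inl (ord0, i0) end.

Definition dsig p (i0 : 'I_p) (h : seq (gV p * gV p)) : {ffun 'I_2 -> gV p} :=
  let rj := nth (gs p, gt p) h (size h).-1 in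
  [ffun a : 'I_2 => if a == ord0 then shadow i0 rj.1 else shadow i0 rj.2].

Definition o1 : 'I_2 := @Ordinal 2 1 isT.
Definition d0f p (i0 : 'I_p) : {ffun 'I_2 -> gV p} := [ffun => inl (ord0, i0)].

Definition isU p (v : gV p) : bool :=
  match v with inl (k, _) => nat_of_ord k == 0 | inr _ => false end.
Definition PR p (v : gV p) : bool :=
  match v with inl (k, _) => nat_of_ord k == 1 | inr b => b end.
Definition PJ p (v : gV p) : bool :=
  match v with inl (k, _) => nat_of_ord k == 2 | inr b => ~~ b end.

Lemma hist_last (V : finType) (r j : nat -> V) n x0 :
  nth x0 (hist r j n) (size (hist r j n)).-1 = (r n, j n).
Proof. by rewrite /hist size_mkseq nth_mkseq. Qed.

Lemma isU_cnbr p (a b : gV p) : isU a -> isU b -> cnbr (@gedge p) a b.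
Proof.
case: a => [[k i]|//]; case: b => [[l j]|//] /= /eqP hk /eqP hl.
rewrite /cnbr /= hk hl /=; case: (eqVneq i j) => [->|ne]; last by rewrite orbT.
by apply/orP; left; apply/eqP; congr (inl (_, _)); apply: val_inj; rewrite /= hk hl.
Qed.

Lemma PR_nU p (v : gV p) : PR v -> isU v = false.
Proof. by case: v => [[k i]|b] //= /eqP ->. Qed.
Lemma PJ_nU p (v : gV p) : PJ v -> isU v = false.
Proof. by case: v => [[k i]|b] //= /eqP ->. Qed.

Lemma dpos_U p (i0 : 'I_p) r j m a :
  isU (dpos (d0f i0) (@dsig p i0) r j m a).
Proof.
case: m => [|m] /=; first by rewrite ffunE.
rewrite ffunE; case: (a == ord0).
  by case: (nth _ _ _).1 => [[k i]|b].
by case: (nth _ _ _).2 => [[k i]|b].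
Qed.

Lemma stepR p (d : {ffun 'I_2 -> gV p}) (v v' : gV p) :
  PR v -> F_legal (@gedge p) d v v' ->
  (forall (k : 'I_3) i, v = inl (k, i) -> d ord0 = inl (ord0, i)) -> PR v'.
Proof.
rewrite /F_legal => Pv /andP [cn] /forallP fa Hd.
case/orP: cn => [/eqP -> //|].
move: Pv Hd fa.
case: v => [[[[|[|[|k]]] Hk] i]|[]] //= _ Hd fa;
  case: v' fa => [[[[|[|[|l]]] Hl] j]|[]] //= fa; rewrite ?andbF ?orbF ?andbT //=.
move=> /eqP hij.
move: (fa ord0); rewrite (Hd _ _ erefl) hij.
by rewrite (_ : Ordinal Hl = ord0) ?eqxx //; apply: val_inj.
Qed.

Lemma stepJ p (d : {ffun 'I_2 -> gV p}) (v v' : gV p) :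
  PJ v -> F_legal (@gedge p) d v v' ->
  (forall (k : 'I_3) i, v = inl (k, i) -> d o1 = inl (ord0, i)) -> PJ v'.
Proof.
rewrite /F_legal => Pv /andP [cn] /forallP fa Hd.
case/orP: cn => [/eqP -> //|].
move: Pv Hd fa.
case: v => [[[[|[|[|k]]] Hk] i]|[]] //= _ Hd fa;
  case: v' fa => [[[[|[|[|l]]] Hl] j]|[]] //= fa; rewrite ?andbF ?orbF ?andbT //=.
move=> /eqP hij.
move: (fa o1); rewrite (Hd _ _ erefl) hij.
by rewrite (_ : Ordinal Hl = ord0) ?eqxx //; apply: val_inj.
Qed.

Lemma div_wins2 p (hp : 2 <= p) : divider_wins (@gedge p) (gs p) (gt p) 2.
Proof.
pose i0 : 'I_p := Ordinal (ltnW hp).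
exists (d0f i0); split; first by move=> i; rewrite ffunE.
exists (dsig i0) => r j r0 j0 n HF.
have inv : forall m, m <= n -> PR (r m) && PJ (j m).
  elim=> [|m IH] hm; first by rewrite r0 j0.
  have /andP [P1 P2] := IH (ltnW hm).
  have [F1 F2] := HF m hm.
  apply/andP; split.
  - apply: (stepR P1 F1) => k i E.
    case: m {IH hm F1 F2 P2} E P1 => [|m] E; first by rewrite r0 in E.
    by move=> _; rewrite /dpos /dsig ffunE hist_last E.
  - apply: (stepJ P2 F2) => k i E.
    case: m {IH hm F1 F2 P1} E P2 => [|m] E; first by rewrite j0 in E.
    by move=> _; rewrite /dpos /dsig ffunE hist_last E.
split.
  have /andP [P1 P2] := inv n (leqnn n).
  move=> E; move: P1 P2; rewrite E; case: (j n) => [[k i]|b] /=; last by case: b.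
  by move=> /eqP ->.
move=> m hm; have /andP [P1 P2] := inv m.+1 hm.
apply/forallP => a; apply/and3P; split.
- by apply: isU_cnbr; apply: dpos_U.
- by apply/eqP => E; move: (dpos_U i0 r j m.+1 a); rewrite E PR_nU.
- by apply/eqP => E; move: (dpos_U i0 r j m.+1 a); rewrite E PJ_nU.
Qed.

Lemma FL1 (V : finType) (e : rel V) (d : {ffun 'I_1 -> V}) x x' :
  cnbr e x x' -> d ord0 != x' -> F_legal e d x x'.
Proof. by move=> c h; apply/andP; split=> //; apply/forallP => i; rewrite (ord1 i). Qed.

Lemma DL1 (V : finType) (e : rel V) (d d' : {ffun 'I_1 -> V}) x y :
  D_legal e d d' x y -> [/\ cnbr e (d ord0) (d' ord0), d' ord0 != x & d' ord0 != y].
Proof. by move/forallP/(_ ord0)/and3P. Qed.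

Definition pl p (L : seq (gV p * gV p)) (n : nat) := nth (gs p, gt p) L n.

Lemma ne_sym p (a b : 'I_p) : a != b -> b != a.
Proof. by rewrite eq_sym. Qed.

Ltac gs_tac ab :=
  rewrite /cnbr /gedge /vu /vx /vy /gs /gt /= ?eqxx ?(negbTE ab) ?(negbTE (ne_sym ab)) ?orbT //=.



Lemma fac_wins p (hp : 2 <= p) : ~ divider_wins (@gedge p) (gs p) (gt p) 1.
Proof.
move=> [d0 [_ [sigma Hw]]].
have [a [b [ab Ha Hb]]] : exists a b : 'I_p, [/\ a != b, d0 ord0 != vx a & d0 ord0 != vy b].
  pose i0 : 'I_p := Ordinal (ltnW hp); pose i1 : 'I_p := Ordinal hp.
  case: (boolP ((d0 ord0 == vx i0) || (d0 ord0 == vy i1))) => [/orP [] /eqP ->|].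
  - by exists i1, i0; split.
  - by exists i1, i0; split.
  - by rewrite negb_or => /andP [h1 h2]; exists i0, i1; split.
have ba := ne_sym ab.
pose h1 := [:: (gs p, gt p); (vx a, vy b)].
have F0 : F_legal (@gedge p) d0 (gs p) (vx a) /\ F_legal (@gedge p) d0 (gt p) (vy b).
  by split; apply: FL1 => //; gs_tac ab.
have [_ W1] := Hw (fun k => (pl h1 k).1) (fun k => (pl h1 k).2) erefl erefl 1
   (fun m => match m with 0 => fun _ => F0 | S _ => fun h => False_ind _ (notF h) end).
pose D1 := sigma h1 ord0.
have [c1 n1a n1b] : [/\ cnbr (@gedge p) (d0 ord0) D1, D1 != vx a & D1 != vy b] := DL1 (W1 0 isT).
case: (eqVneq D1 (vu a)) => HA.
-
  pose h2 := [:: (gs p, gt p); (vx a, vy b); (vx a, vu b)].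
  have F1 : F_legal (@gedge p) (sigma h1) (vx a) (vx a) /\ F_legal (@gedge p) (sigma h1) (vy b) (vu b).
    split; apply: FL1; rewrite -/D1 ?HA //; try by gs_tac ab.
  have [_ W2] := Hw (fun k => (pl h2 k).1) (fun k => (pl h2 k).2) erefl erefl 2
   (fun m => match m with 0 => fun _ => F0 | 1 => fun _ => F1 | S (S _) => fun h => False_ind _ (notF h) end).
  pose D2 := sigma h2 ord0.
  have [c2 n2a n2b] : [/\ cnbr (@gedge p) D1 D2, D2 != vx a & D2 != vu b] := DL1 (W2 1 isT).
  case: (eqVneq D2 (vu a)) => HB.
  + (* D2 = u_a : R goes around *)
    pose h3 := [:: (gs p, gt p); (vx a, vy b); (vx a, vu b); (gs p, vu b)].
    have F2 : F_legal (@gedge p) (sigma h2) (vx a) (gs p) /\ F_legal (@gedge p) (sigma h2) (vu b) (vu b).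
      by split; apply: FL1; rewrite -/D2 ?HB //; try by gs_tac ab.
    have [_ W3] := Hw (fun k => (pl h3 k).1) (fun k => (pl h3 k).2) erefl erefl 3
      (fun m => match m with 0 => fun _ => F0 | 1 => fun _ => F1 | 2 => fun _ => F2
                | S (S (S _)) => fun h => False_ind _ (notF h) end).
    pose D3 := sigma h3 ord0.
    have [c3 n3a n3b] : [/\ cnbr (@gedge p) D2 D3, D3 != gs p & D3 != vu b] := DL1 (W3 2 isT).
    pose h4 := [:: (gs p, gt p); (vx a, vy b); (vx a, vu b); (gs p, vu b); (vx b, vu b)].
    have F3 : F_legal (@gedge p) (sigma h3) (gs p) (vx b) /\ F_legal (@gedge p) (sigma h3) (vu b) (vu b).
      split; apply: FL1; rewrite -/D3 //; try by gs_tac ab.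
      apply/eqP => E; move: c3; rewrite HB E; gs_tac ab.
    have [_ W4] := Hw (fun k => (pl h4 k).1) (fun k => (pl h4 k).2) erefl erefl 4
      (fun m => match m with 0 => fun _ => F0 | 1 => fun _ => F1 | 2 => fun _ => F2
                | 3 => fun _ => F3 | S (S (S (S _))) => fun h => False_ind _ (notF h) end).
    pose D4 := sigma h4 ord0.
    have [c4 n4a n4b] : [/\ cnbr (@gedge p) D3 D4, D4 != vx b & D4 != vu b] := DL1 (W4 3 isT).
    pose h5 := [:: (gs p, gt p); (vx a, vy b); (vx a, vu b); (gs p, vu b); (vx b, vu b); (vu b, vu b)].
    have F4 : F_legal (@gedge p) (sigma h4) (vx b) (vu b) /\ F_legal (@gedge p) (sigma h4) (vu b) (vu b).
      by split; apply: FL1; rewrite -/D4 //; try by gs_tac ab.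
    have [W5 _] := Hw (fun k => (pl h5 k).1) (fun k => (pl h5 k).2) erefl erefl 5
      (fun m => match m with 0 => fun _ => F0 | 1 => fun _ => F1 | 2 => fun _ => F2
                | 3 => fun _ => F3 | 4 => fun _ => F4 | S (S (S (S (S _)))) => fun h => False_ind _ (notF h) end).
    by apply: W5.
  + pose h3 := [:: (gs p, gt p); (vx a, vy b); (vx a, vu b); (vu a, vu a)].
    have F2 : F_legal (@gedge p) (sigma h2) (vx a) (vu a) /\ F_legal (@gedge p) (sigma h2) (vu b) (vu a).
      by split; apply: FL1; rewrite -/D2 //; try by gs_tac ab.
    have [W3 _] := Hw (fun k => (pl h3 k).1) (fun k => (pl h3 k).2) erefl erefl 3
      (fun m => match m with 0 => fun _ => F0 | 1 => fun _ => F1 | 2 => fun _ => F2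
                | S (S (S _)) => fun h => False_ind _ (notF h) end).
    by apply: W3.
- pose h2 := [:: (gs p, gt p); (vx a, vy b); (vu a, vy b)].
  have F1 : F_legal (@gedge p) (sigma h1) (vx a) (vu a) /\ F_legal (@gedge p) (sigma h1) (vy b) (vy b).
    by split; apply: FL1; rewrite -/D1 //; try by gs_tac ab.
  have [_ W2] := Hw (fun k => (pl h2 k).1) (fun k => (pl h2 k).2) erefl erefl 2
   (fun m => match m with 0 => fun _ => F0 | 1 => fun _ => F1 | S (S _) => fun h => False_ind _ (notF h) end).
  pose D2 := sigma h2 ord0.
  have [c2 n2a n2b] : [/\ cnbr (@gedge p) D1 D2, D2 != vu a & D2 != vy b] := DL1 (W2 1 isT).
  case: (eqVneq D2 (vu b)) => HB.
  + pose h3 := [:: (gs p, gt p); (vx a, vy b); (vu a, vy b); (vu a, gt p)].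
    have F2 : F_legal (@gedge p) (sigma h2) (vu a) (vu a) /\ F_legal (@gedge p) (sigma h2) (vy b) (gt p).
      by split; apply: FL1; rewrite -/D2 ?HB //; try by gs_tac ab.
    have [_ W3] := Hw (fun k => (pl h3 k).1) (fun k => (pl h3 k).2) erefl erefl 3
      (fun m => match m with 0 => fun _ => F0 | 1 => fun _ => F1 | 2 => fun _ => F2
                | S (S (S _)) => fun h => False_ind _ (notF h) end).
    pose D3 := sigma h3 ord0.
    have [c3 n3a n3b] : [/\ cnbr (@gedge p) D2 D3, D3 != vu a & D3 != gt p] := DL1 (W3 2 isT).
    pose h4 := [:: (gs p, gt p); (vx a, vy b); (vu a, vy b); (vu a, gt p); (vu a, vy a)].
    have F3 : F_legal (@gedge p) (sigma h3) (vu a) (vu a) /\ F_legal (@gedge p) (sigma h3) (gt p) (vy a).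
      split; apply: FL1; rewrite -/D3 //; try by gs_tac ab.
      apply/eqP => E; move: c3; rewrite HB E; gs_tac ab.
    have [_ W4] := Hw (fun k => (pl h4 k).1) (fun k => (pl h4 k).2) erefl erefl 4
      (fun m => match m with 0 => fun _ => F0 | 1 => fun _ => F1 | 2 => fun _ => F2
                | 3 => fun _ => F3 | S (S (S (S _))) => fun h => False_ind _ (notF h) end).
    pose D4 := sigma h4 ord0.
    have [c4 n4a n4b] : [/\ cnbr (@gedge p) D3 D4, D4 != vu a & D4 != vy a] := DL1 (W4 3 isT).
    pose h5 := [:: (gs p, gt p); (vx a, vy b); (vu a, vy b); (vu a, gt p); (vu a, vy a); (vu a, vu a)].
    have F4 : F_legal (@gedge p) (sigma h4) (vu a) (vu a) /\ F_legal (@gedge p) (sigma h4) (vy a) (vu a).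
      by split; apply: FL1; rewrite -/D4 //; try by gs_tac ab.
    have [W5 _] := Hw (fun k => (pl h5 k).1) (fun k => (pl h5 k).2) erefl erefl 5
      (fun m => match m with 0 => fun _ => F0 | 1 => fun _ => F1 | 2 => fun _ => F2
                | 3 => fun _ => F3 | 4 => fun _ => F4 | S (S (S (S (S _)))) => fun h => False_ind _ (notF h) end).
    by apply: W5.
  + pose h3 := [:: (gs p, gt p); (vx a, vy b); (vu a, vy b); (vu b, vu b)].
    have F2 : F_legal (@gedge p) (sigma h2) (vu a) (vu b) /\ F_legal (@gedge p) (sigma h2) (vy b) (vu b).
      by split; apply: FL1; rewrite -/D2 //; try by gs_tac ab.
    have [W3 _] := Hw (fun k => (pl h3 k).1) (fun k => (pl h3 k).2) erefl erefl 3
      (fun m => match m with 0 => fun _ => F0 | 1 => fun _ => F1 | 2 => fun _ => F2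
                | S (S (S _)) => fun h => False_ind _ (notF h) end).
    by apply: W3.
Qed.

Theorem mainTheorem6 (p : nat) (hp : 2 <= p) :
  lambdaG (@gedge p) (gs p) (gt p) = Some p /\
  dG (@gedge p) (gs p) (gt p) = Some 2.
Proof.
split; first exact: lambda_part.
rewrite /dG /=.
case: pselect => [H|H]; last first.
  by exfalso; apply: H; exists 2; split => //; exact: div_wins2.
congr Some.
case: ex_minnP => m /asboolP [m0 Wm] Hmin.
have m2 : m <= 2 by apply: Hmin; apply/asboolP; split => //; exact: div_wins2.
case: m m0 Wm m2 {Hmin} => [|[|[|m]]] //= _ Wm _.
by exfalso; exact: fac_wins Wm.
Qed.
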